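(* Let $\mu,\nu$ be constants and consider the equation $m_t+f(u,u_x)m+(g(u,u_x)m)_x=0$, $m=u-u_{xx}$, where $(f,g)$ belongs to one of the three families: (a) $\nu=0$, $\mu=2$, $f=-\tfrac12u_xh'(u)$, $g=h(u)$ with $h$ an arbitrary smooth function; (b) $\nu\neq0$, $\mu=2$, $f=\alpha u_x$, $g=-2\alpha u+\beta$ with $\alpha,\beta$ constants; (c) $\mu\neq2$, $\nu=(\mu-2)\beta$, $f=\alpha u_x/(u+\beta)^3$, $g=\alpha/(u+\beta)^2$ with $\alpha,\beta$ constants. Then for every locally smooth solution $u(t,x)$ the local conservation law $D_tT+D_x\Phi=0$ holds with $$T=u_{xx}^2+\mu u_x^2+(\mu-1)u^2+2\nu u,$$ $$\Phi=2((1-\mu)u-\nu)u_{tx}-2u_xu_t+\big(2((\mu-2)u+\nu)+m\big)mg+\big((2-\mu)(u^2-u_x^2)-\nu u\big)g+\tfrac12((\mu-2)u+\nu)u_x^2g_u+\nu G,$$ where $G=\int g\,du$. Consequently, on a spatial domain $\Omega\subseteq\mathbb R$, the gradient energy $E[u]=\int_\Omega u_{xx}^2+\mu u_x^2+(\mu-1)u^2+2\nu u\,dx$ satisfies $\frac{d}{dt}E=0$ for all solutions whose flux $\Phi$ vanishes at $\partial\Omega$.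
   Context: $D_t$, $D_x$ denote total derivatives; the conservation law holds on solutions, i.e. after eliminating $m_t$ via $m_t=-f(u,u_x)m-(g(u,u_x)m)_x$. In each family $g$ depends only on $u$, $g_u$ is its derivative, and $G$ is an antiderivative of $g$ with respect to $u$. In family (c) the expressions are considered where $u+\beta\neq0$. *)

(* Defs.v *)
From Stdlib Require Import Reals Lra List.
From Coquelicot Require Import Coquelicot.
Open Scope R_scope.

Definition pDt (u : R -> R -> R) : R -> R -> R :=
  fun t x => Derive (fun s => u s x) t.
Definition pDx (u : R -> R -> R) : R -> R -> R :=
  fun t x => Derive (fun y => u t y) x.

(* iterated partial derivative: true = d/dt, false = d/dx, applied
   from the end of the list first *)
Fixpoint pd (l : list bool) (u : R -> R -> R) : R -> R -> R :=
  match l with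
  | nil => u
  | b :: l' => if b then pDt (pd l' u) else pDx (pd l' u)
  end.

Definition smooth_on (D : R * R -> Prop) (u : R -> R -> R) : Prop :=
  forall (l : list bool) (t x : R), D (t, x) ->
    continuous (fun p : R * R => pd l u (fst p) (snd p)) (t, x) /\
    ex_derive (fun s => pd l u s x) t /\
    ex_derive (fun y => pd l u t y) x.

Definition smooth1 (h : R -> R) : Prop :=
  forall (n : nat) (y : R), ex_derive (Derive_n h n) y.

Definition mfun (u : R -> R -> R) : R -> R -> R :=
  fun t x => u t x - pDx (pDx u) t x.

Definition is_solution (f : R -> R -> R) (g : R -> R)
  (D : R * R -> Prop) (u : R -> R -> R) : Prop :=
  forall t x, D (t, x) ->
    pDt (mfun u) t x + f (u t x) (pDx u t x) * mfun u t x
    + pDx (fun s y => g (u s y) * mfun u s y) t x = 0.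

Definition family_a (mu nu : R) (f : R -> R -> R) (g G : R -> R) : Prop :=
  exists h : R -> R, smooth1 h /\ nu = 0 /\ mu = 2 /\
    (forall y p, f y p = - (1/2) * p * Derive h y) /\
    (forall y, g y = h y) /\
    (forall y, is_derive G y (g y)).

Definition family_b (mu nu : R) (f : R -> R -> R) (g G : R -> R) : Prop :=
  exists alpha beta : R, nu <> 0 /\ mu = 2 /\
    (forall y p, f y p = alpha * p) /\
    (forall y, g y = -2 * alpha * y + beta) /\
    (forall y, is_derive G y (g y)).

Definition family_c (mu nu : R) (f : R -> R -> R) (g G : R -> R)
  (D : R * R -> Prop) (u : R -> R -> R) : Prop :=
  exists alpha beta : R, mu <> 2 /\ nu = (mu - 2) * beta /\
    (forall y p, y + beta <> 0 -> f y p = alpha * p / (y + beta) ^ 3) /\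
    (forall y, y + beta <> 0 -> g y = alpha / (y + beta) ^ 2) /\
    (forall y, y + beta <> 0 -> is_derive G y (g y)) /\
    (forall t x, D (t, x) -> u t x + beta <> 0).

Definition Tdens (mu nu : R) (u : R -> R -> R) : R -> R -> R :=
  fun t x => (pDx (pDx u) t x) ^ 2 + mu * (pDx u t x) ^ 2
             + (mu - 1) * (u t x) ^ 2 + 2 * nu * u t x.

Definition Phi (mu nu : R) (g G : R -> R) (u : R -> R -> R) : R -> R -> R :=
  fun t x =>
    let U := u t x in
    let Ux := pDx u t x in
    let Ut := pDt u t x in
    let Utx := pDx (pDt u) t x in
    let M := mfun u t x in
    2 * ((1 - mu) * U - nu) * Utx - 2 * Ux * Ut
    + (2 * ((mu - 2) * U + nu) + M) * M * g U
    + ((2 - mu) * (U ^ 2 - Ux ^ 2) - nu * U) * g U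
    + (1/2) * ((mu - 2) * U + nu) * Ux ^ 2 * Derive g U
    + nu * G U.

Definition Energy (mu nu : R) (u : R -> R -> R) (a b : R) : R -> R :=
  fun t => RInt (fun x => Tdens mu nu u t x) a b.

(* Main.v *)
Require Import Defs.
From Stdlib Require Import Reals Lra List.
From Coquelicot Require Import Coquelicot.
Import ListNotations.
Open Scope R_scope.

Lemma is_derive_eq (f : R -> R) (x l l' : R) : is_derive f x l' -> l' = l -> is_derive f x l.
Proof. intros H ->; exact H. Qed.

Lemma dconst (c x : R) : is_derive (fun _ : R => c) x 0.
Proof. exact (is_derive_const c x). Qed.

Lemma dplus (f g : R -> R) x a b : is_derive f x a -> is_derive g x b ->
  is_derive (fun y => f y + g y) x (a + b).
Proof. intros. exact (is_derive_plus f g x a b H H0). Qed.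

Lemma dminus (f g : R -> R) x a b : is_derive f x a -> is_derive g x b ->
  is_derive (fun y => f y - g y) x (a - b).
Proof. intros. exact (is_derive_minus f g x a b H H0). Qed.

Lemma dmult (f g : R -> R) x a b : is_derive f x a -> is_derive g x b ->
  is_derive (fun y => f y * g y) x (a * g x + f x * b).
Proof. intros. exact (Derive.is_derive_mult f g x a b H H0). Qed.

Lemma dcomp (h f : R -> R) x a b : is_derive h (f x) a -> is_derive f x b ->
  is_derive (fun y => h (f y)) x (a * b).
Proof. intros. eapply is_derive_eq. exact (is_derive_comp h f x a b H H0).
  simpl. change (b * a = a * b). ring. Qed.

Lemma dsq (f : R -> R) x a : is_derive f x a -> is_derive (fun y => f y ^ 2) x (2 * a * f x).
Proof. intros. eapply is_derive_eq. exact (is_derive_pow f 2 x a H). simpl. ring. Qed.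

Lemma dopp (f : R -> R) x a : is_derive f x a -> is_derive (fun y => - f y) x (- a).
Proof. intros. exact (is_derive_opp f x a H). Qed.

Lemma open_2d (D : R * R -> Prop) (P : R -> R -> Prop) t x : open D -> D (t,x) ->
  (forall s y, D (s,y) -> P s y) -> locally_2d P t x.
Proof.
  intros HD Hin HP. apply locally_2d_locally.
  apply (locally_open D); auto.
  intros [s y] H; apply HP; exact H.
Qed.

Lemma open_x (D : R * R -> Prop) t x : open D -> D (t,x) -> locally x (fun y => D (t,y)).
Proof. intros. apply (locally_2d_1d_const_x (fun s y => D (s,y))). apply (open_2d D); auto. Qed.

Lemma open_t (D : R * R -> Prop) t x : open D -> D (t,x) -> locally t (fun s => D (s,x)).
Proof. intros. apply (locally_2d_1d_const_y (fun s y => D (s,y))). apply (open_2d D); auto. Qed.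

Lemma Lx D u l t x : smooth_on D u -> D (t,x) ->
  is_derive (fun y => pd l u t y) x (pd (false :: l) u t x).
Proof. intros HS H. destruct (HS l t x H) as [_ [_ H3]]. exact (Derive_correct _ _ H3). Qed.

Lemma Lt D u l t x : smooth_on D u -> D (t,x) ->
  is_derive (fun s => pd l u s x) t (pd (true :: l) u t x).
Proof. intros HS H. destruct (HS l t x H) as [_ [H2 _]]. exact (Derive_correct _ _ H2). Qed.

Lemma C2d D u l t x : smooth_on D u -> D (t,x) -> continuity_2d_pt (pd l u) t x.
Proof. intros HS H. destruct (HS l t x H) as [H1 _]. apply continuity_2d_pt_filterlim. exact H1. Qed.

Lemma SW D u l t x : open D -> smooth_on D u -> D (t,x) ->
  pd (true :: false :: l) u t x = pd (false :: true :: l) u t x.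
Proof.
  intros HD HS Hin.
  apply (Schwarz (pd l u) t x).
  - apply (open_2d D); auto. intros s y H.
    destruct (HS l s y H) as [_ [A B]].
    destruct (HS (false :: l) s y H) as [_ [C _]].
    destruct (HS (true :: l) s y H) as [_ [_ E]].
    repeat split; assumption.
  - exact (C2d D u (true :: false :: l) t x HS Hin).
  - exact (C2d D u (false :: true :: l) t x HS Hin).
Qed.

Lemma SW2 D u t x : open D -> smooth_on D u -> D (t,x) ->
  pd [true; false; false] u t x = pd [false; false; true] u t x.
Proof.
  intros HD HS Hin.
  rewrite (SW D u [false] t x HD HS Hin).
  change (Derive (fun y => pd [true;false] u t y) x = Derive (fun y => pd [false;true] u t y) x).
  apply Derive_ext_loc.
  generalize (open_x D t x HD Hin). apply filter_imp. intros y Hy.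
  exact (SW D u nil t y HD HS Hy).
Qed.

Ltac drv D u HS g G :=
  repeat match goal with
  | |- is_derive (fun _ => ?c) _ _ => apply dconst
  | |- is_derive (fun s => u s ?x) ?t _ => exact (Lt D u nil t x HS ltac:(assumption))
  | |- is_derive (fun s => pDx u s ?x) ?t _ => exact (Lt D u [false] t x HS ltac:(assumption))
  | |- is_derive (fun s => pDx (pDx u) s ?x) ?t _ => exact (Lt D u [false;false] t x HS ltac:(assumption))
  | |- is_derive (fun y => u ?t y) ?x _ => exact (Lx D u nil t x HS ltac:(assumption))
  | |- is_derive (fun y => pDx u ?t y) ?x _ => exact (Lx D u [false] t x HS ltac:(assumption))
  | |- is_derive (fun y => pDx (pDx u) ?t y) ?x _ => exact (Lx D u [false;false] t x HS ltac:(assumption))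
  | |- is_derive (fun y => pDt u ?t y) ?x _ => exact (Lx D u [true] t x HS ltac:(assumption))
  | |- is_derive (fun y => pDx (pDt u) ?t y) ?x _ => exact (Lx D u [false;true] t x HS ltac:(assumption))
  | |- is_derive (fun y => pDt (pDx u) ?t y) ?x _ => exact (Lx D u [true;false] t x HS ltac:(assumption))
  | |- is_derive (fun y => pDt (pDx (pDx u)) ?t y) ?x _ => exact (Lx D u [true;false;false] t x HS ltac:(assumption))
  | |- is_derive (fun y => pDx (pDx (pDt u)) ?t y) ?x _ => exact (Lx D u [false;false;true] t x HS ltac:(assumption))
  | |- is_derive (fun y => g (@?F y)) _ _ => eapply (dcomp g F); [eassumption|]
  | |- is_derive (fun y => Derive g (@?F y)) _ _ => eapply (dcomp (Derive g) F); [eassumption|]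
  | |- is_derive (fun y => G (@?F y)) _ _ => eapply (dcomp G F); [eassumption|]
  | |- is_derive (fun y => @?A y + @?B y) _ _ => eapply (dplus A B)
  | |- is_derive (fun y => @?A y - @?B y) _ _ => eapply (dminus A B)
  | |- is_derive (fun y => @?A y * @?B y) _ _ => eapply (dmult A B)
  | |- is_derive (fun y => @?A y ^ 2) _ _ => eapply (dsq A)
  | |- is_derive (fun y => - @?A y) _ _ => eapply (dopp A)
  end.

Definition Tt (mu nu : R) (u : R -> R -> R) t x :=
  2 * pd [false;false] u t x * pd [true;false;false] u t x
  + 2 * mu * pd [false] u t x * pd [true;false] u t x
  + 2 * (mu - 1) * u t x * pd [true] u t x + 2 * nu * pd [true] u t x.

Lemma Tdens_t D u mu nu t x : smooth_on D u -> D (t,x) ->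
  is_derive (fun s => Tdens mu nu u s x) t (Tt mu nu u t x).
Proof.
  intros HS Hin. unfold Tdens. eapply is_derive_eq. drv D u HS (fun y:R => y) (fun y:R => y).
  unfold Tt. cbn [pd]. ring.
Qed.

Definition expr mu nu u ux uxx uxxx ut utx utxx g g1 g2 :=
  let M := u - uxx in let Mx := ux - uxxx in
  (2*uxx*utxx + 2*mu*ux*utx + 2*(mu-1)*u*ut + 2*nu*ut)
  + (2*(1-mu)*ux*utx + 2*((1-mu)*u - nu)*utxx)
  + (-2*uxx*ut - 2*ux*utx)
  + ((2*(mu-2)*ux + Mx)*M*g + (2*((mu-2)*u+nu)+M)*(Mx*g + M*g1*ux))
  + (((2-mu)*(2*u*ux - 2*ux*uxx) - nu*ux)*g + ((2-mu)*(u^2-ux^2) - nu*u)*g1*ux)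
  + (1/2*(mu-2)*ux^3*g1 + ((mu-2)*u+nu)*ux*uxx*g1 + 1/2*((mu-2)*u+nu)*ux^3*g2)
  + nu*g*ux.

Lemma core mu nu f g G D u t x g1 g2 :
  open D -> smooth_on D u -> is_solution f g D u -> D (t,x) ->
  is_derive g (u t x) g1 -> is_derive (Derive g) (u t x) g2 ->
  is_derive G (u t x) (g (u t x)) ->
  (forall ux uxx uxxx ut utx,
     expr mu nu (u t x) ux uxx uxxx ut utx
       (ut + f (u t x) ux * (u t x - uxx) + g1 * ux * (u t x - uxx) + g (u t x) * (ux - uxxx))
       (g (u t x)) g1 g2 = 0) ->
  is_derive (fun y => Phi mu nu g G u t y) x (- Tt mu nu u t x).
Proof.
  intros HD HS Hsol Hin Hg1 Hg2 HG Halg.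
  assert (Dg: Derive g (u t x) = g1) by (apply is_derive_unique; assumption).
  assert (E1: pDt (mfun u) t x = pDt u t x - pDt (pDx (pDx u)) t x).
  { unfold pDt at 1. unfold mfun. apply is_derive_unique. eapply is_derive_eq.
    drv D u HS g G. cbn [pd]. ring. }
  assert (E2: pDx (fun s y => g (u s y) * mfun u s y) t x
             = g1 * pDx u t x * mfun u t x + g (u t x) * (pDx u t x - pDx (pDx (pDx u)) t x)).
  { unfold pDx at 1. unfold mfun. apply is_derive_unique. eapply is_derive_eq.
    drv D u HS g G. cbn [pd]. ring. }
  pose proof (Hsol t x Hin) as Hs. rewrite E1, E2 in Hs.
  pose proof (SW D u nil t x HD HS Hin) as C1. cbn [pd] in C1.
  pose proof (SW2 D u t x HD HS Hin) as C2. cbn [pd] in C2.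
  rewrite C2 in Hs.
  unfold Phi. cbv beta zeta. unfold mfun. eapply is_derive_eq.
  drv D u HS g G.
  unfold Tt. cbn [pd]. rewrite Dg, C1, C2.
  assert (Eu: pDx (pDx (pDt u)) t x = pDt u t x + f (u t x) (pDx u t x) * mfun u t x
     + (g1 * pDx u t x * mfun u t x + g (u t x) * (pDx u t x - pDx (pDx (pDx u)) t x))) by lra.
  rewrite Eu. unfold mfun.
  pose proof (Halg (pDx u t x) (pDx (pDx u) t x) (pDx (pDx (pDx u)) t x) (pDt u t x) (pDx (pDt u) t x)) as HA.
  unfold expr in HA. cbv zeta in HA.
  apply Rminus_diag_uniq.
  match type of HA with ?E = 0 => transitivity E end.
  field. exact HA.
Qed.

Definition GOK mu nu (f : R -> R -> R) (g G : R -> R) U :=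
  exists g1 g2, is_derive g U g1 /\ is_derive (Derive g) U g2 /\ is_derive G U (g U) /\
  (forall ux uxx uxxx ut utx,
     expr mu nu U ux uxx uxxx ut utx
       (ut + f U ux * (U - uxx) + g1 * ux * (U - uxx) + g U * (ux - uxxx))
       (g U) g1 g2 = 0).

Lemma famA mu nu f g G U : family_a mu nu f g G -> GOK mu nu f g G U.
Proof.
  intros [h [Hh [-> [-> [Hf [Hg HG]]]]]].
  exists (Derive h U), (Derive (Derive h) U). split; [|split; [|split]].
  - apply (is_derive_ext h g). { intros; symmetry; apply Hg. }
    apply Derive_correct. exact (Hh 0%nat U).
  - apply (is_derive_ext (Derive h) (Derive g)).
    { intros; apply Derive_ext; intros; symmetry; apply Hg. }
    apply Derive_correct. exact (Hh 1%nat U).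
  - apply HG.
  - intros. rewrite Hf, Hg. unfold expr. cbv zeta. field.
Qed.

Lemma famB mu nu f g G U : family_b mu nu f g G -> GOK mu nu f g G U.
Proof.
  intros [al [be [Hnu [-> [Hf [Hg HG]]]]]].
  assert (Hd : forall y, is_derive g y (-2 * al)).
  { intros y. apply (is_derive_ext (fun y => -2 * al * y + be) g).
    { intros; symmetry; apply Hg. }
    auto_derive; auto. ring. }
  exists (-2 * al), 0. split; [|split; [|split]].
  - apply Hd.
  - apply (is_derive_ext (fun _ => -2 * al) (Derive g)).
    { intros; symmetry; apply is_derive_unique, Hd. }
    apply dconst.
  - apply HG.
  - intros. rewrite Hf, Hg. unfold expr. cbv zeta. field.
Qed.

Lemma loc_ne (be U : R) : U + be <> 0 -> locally U (fun y => y + be <> 0).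
Proof.
  intros H. apply (locally_open (fun y => y < - be \/ - be < y)).
  - apply open_or; [apply open_lt | apply open_gt].
  - intros y [Hy|Hy]; lra.
  - lra.
Qed.

Lemma famC mu nu f g G D u t x : family_c mu nu f g G D u -> D (t,x) -> GOK mu nu f g G (u t x).
Proof.
  intros [al [be [Hmu [Hnu [Hf [Hg [HG Hne]]]]]]] Hin.
  pose proof (Hne t x Hin) as H0. set (U := u t x) in *.
  assert (Hd : forall y, y + be <> 0 -> is_derive g y (-2 * al / (y + be) ^ 3)).
  { intros y Hy. apply (is_derive_ext_loc (fun y => al / (y + be) ^ 2) g).
    { generalize (loc_ne be y Hy). apply filter_imp. intros z Hz. symmetry; apply Hg; auto. }
    auto_derive. { intro Z; apply Hy; rewrite Rmult_1_r in Z; destruct (Rmult_integral _ _ Z); auto. } field. auto. }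
  exists (-2 * al / (U + be) ^ 3), (6 * al / (U + be) ^ 4). split; [|split; [|split]].
  - apply Hd; auto.
  - apply (is_derive_ext_loc (fun y => -2 * al / (y + be) ^ 3) (Derive g)).
    { generalize (loc_ne be U H0). apply filter_imp. intros z Hz. symmetry; apply is_derive_unique, Hd; auto. }
    auto_derive. { match goal with |- ?A <> 0 => replace A with ((U+be)^3) by ring end; apply pow_nonzero; auto. } field. auto.
  - apply HG; auto.
  - intros. rewrite Hnu, (Hf _ _ H0), (Hg _ H0). unfold expr. cbv zeta. field. auto.
Qed.

Ltac cont2 D u HS :=
  repeat match goal with
  | |- continuity_2d_pt (fun _ _ => ?c) _ _ => apply continuity_2d_pt_const
  | |- continuity_2d_pt (fun a b => pd ?l u a b) ?t ?x => exact (C2d D u l t x HS ltac:(assumption))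
  | |- continuity_2d_pt (fun a b => u a b) ?t ?x => exact (C2d D u nil t x HS ltac:(assumption))
  | |- continuity_2d_pt (fun a b => @?A a b + @?B a b) _ _ => apply (continuity_2d_pt_plus A B)
  | |- continuity_2d_pt (fun a b => @?A a b - @?B a b) _ _ => apply (continuity_2d_pt_minus A B)
  | |- continuity_2d_pt (fun a b => @?A a b * @?B a b) _ _ => apply (continuity_2d_pt_mult A B)
  end.

Theorem theorem3 :
  forall (mu nu : R) (f : R -> R -> R) (g G : R -> R)
         (D : R * R -> Prop) (u : R -> R -> R),
    open D ->
    smooth_on D u ->
    (family_a mu nu f g G \/ family_b mu nu f g G \/ family_c mu nu f g G D u) ->
    is_solution f g D u ->
    (* local conservation law D_t T + D_x Phi = 0 *)
    (forall t x, D (t, x) ->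
       pDt (Tdens mu nu u) t x + pDx (Phi mu nu g G u) t x = 0)
    /\
    (* conservation of the gradient energy on Omega = [a,b] *)
    (forall a b t1 t2 : R, a < b -> t1 < t2 ->
       (forall t x, t1 < t < t2 -> a <= x <= b -> D (t, x)) ->
       (forall t, t1 < t < t2 ->
          Phi mu nu g G u t a = 0 /\ Phi mu nu g G u t b = 0) ->
       forall t, t1 < t < t2 -> is_derive (Energy mu nu u a b) t 0).
Proof.
  intros mu nu f g G D u HD HS Hfam Hsol.
  assert (GK : forall t x, D (t,x) -> GOK mu nu f g G (u t x)).
  { intros t x H. destruct Hfam as [A|[B|C]].
    - apply famA; auto. - apply famB; auto. - eapply famC; eauto. }
  assert (PX : forall t x, D (t,x) -> is_derive (fun y => Phi mu nu g G u t y) x (- Tt mu nu u t x)).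
  { intros t x H. destruct (GK t x H) as [g1 [g2 [A [B [C E]]]]]. eapply core; eauto. }
  assert (TX : forall t x, D (t,x) -> Derive (fun s => Tdens mu nu u s x) t = Tt mu nu u t x).
  { intros t x H. apply is_derive_unique. apply Tdens_t with D; auto. }
  assert (PX' : forall t x, D (t,x) -> Derive (Phi mu nu g G u t) x = - Tt mu nu u t x).
  { intros t x H. apply is_derive_unique. exact (PX t x H). }
  split.
  { intros t x H. unfold pDt, pDx. rewrite TX by auto. rewrite PX' by auto. ring. }
  intros a b t1 t2 Hab Ht HDab HPhi t Ht'.
  assert (Hloc : locally t (fun s => t1 < s < t2)).
  { apply (locally_open (fun s => t1 < s /\ s < t2)).
    - apply open_and; [apply open_gt | apply open_lt].
    - auto.
    - exact Ht'. }
  unfold Energy. eapply is_derive_eq.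
  apply (is_derive_RInt_param (fun s y => Tdens mu nu u s y) a b t).
  - generalize Hloc. apply filter_imp. intros s Hs y Hy.
    rewrite Rmin_left in Hy by lra. rewrite Rmax_right in Hy by lra.
    eexists. apply Tdens_t with D; auto.
  - intros y Hy. rewrite Rmin_left in Hy by lra. rewrite Rmax_right in Hy by lra.
    assert (Hin : D (t,y)) by auto.
    apply continuity_2d_pt_ext_loc with (Tt mu nu u).
    + apply (open_2d D); auto. intros s z Hz. symmetry. apply TX; auto.
    + unfold Tt. cont2 D u HS.
  - generalize Hloc. apply filter_imp. intros s Hs.
    apply (@ex_RInt_continuous R_CompleteNormedModule). intros z Hz.
    rewrite Rmin_left in Hz by lra. rewrite Rmax_right in Hz by lra.
    assert (Hin : D (s,z)) by auto.
    apply (@ex_derive_continuous R_AbsRing R_NormedModule). eexists. unfold Tdens. drv D u HS g G.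
  - assert (CD : forall z, a <= z <= b -> continuous (Derive (Phi mu nu g G u t)) z).
    { intros z Hz. assert (Hin : D (t,z)) by auto.
      apply continuous_ext_loc with (fun y => - Tt mu nu u t y).
      + generalize (open_x D t z HD Hin). apply filter_imp. intros y Hy. symmetry. apply PX'; auto.
      + apply (@ex_derive_continuous R_AbsRing R_NormedModule). eexists. unfold Tt. cbn [pd]. drv D u HS g G. }
    rewrite (RInt_ext _ (fun y => opp (Derive (Phi mu nu g G u t) y))).
    2: { intros y Hy. rewrite Rmin_left in Hy by lra. rewrite Rmax_right in Hy by lra.
         assert (Hin : D (t,y)) by (apply HDab; auto; lra).
         rewrite TX by auto. rewrite PX' by auto. unfold opp; simpl. ring. }
    rewrite (@RInt_opp R_CompleteNormedModule).
    2: { apply (@ex_RInt_continuous R_CompleteNormedModule). intros z Hz.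
         rewrite Rmin_left in Hz by lra. rewrite Rmax_right in Hz by lra. auto. }
    rewrite RInt_Derive.
    + destruct (HPhi t Ht') as [P1 P2]. rewrite P1, P2. unfold opp, minus, plus, opp; simpl. ring.
    + intros z Hz. rewrite Rmin_left in Hz by lra. rewrite Rmax_right in Hz by lra.
      eexists. apply PX; auto.
    + intros z Hz. rewrite Rmin_left in Hz by lra. rewrite Rmax_right in Hz by lra. auto.
Qed.
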